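(* If the communication graph of a system with $n$ trajectories is a tree, then its uncovering-resilience is $n-1$.
   Context: Model. A system consists of pairwise disjoint unit circles $C_1,\dots,C_n$ in the plane (trajectories) and a communication range $r>0$. Its communication graph $G$ has vertex set $\{C_1,\dots,C_n\}$, $C_i,C_j$ adjacent iff the distance between their centres is at most $2+r$. Positions on a circle are angles (mod $2\pi$). For an edge $(i,j)$, the link position $\phi_{ij}$ is the angle of the point of $C_i$ closest to $C_j$. A schedule $F=(f,g)$ assigns each circle a starting angle $f(C_i)$ and direction $g(C_i)\in\{1,-1\}$; a robot following it on $C_i$ is at $f(C_i)+g(C_i)2\pi t$ at time $t$. $F$ is a synchronization schedule if $g(C_i)=-g(C_j)$ for adjacent circles and robots following $F$ on adjacent $C_i,C_j$ are at $\phi_{ij},\phi_{ji}$ at exactly the same times. A synchronized communication system (SCS) consists of $n$ robots, initially one per circle, following a synchronization schedule, with the switching rule: when a robot on $C_i$ reaches $\phi_{ij}$ and $C_j$ is empty, it instantly passes to $C_j$ and follows the schedule of $C_j$; if $C_j$ has a robot, they meet and each stays on its circle. A partial SCS arises by letting some robots leave (possibly at different times). A circle is covered if every point of it is visited periodically by surviving robots. The uncovering-resilience is the largest $k$ such that whichever $k$ robots leave, all circles remain covered. (This value does not depend on the chosen synchronization schedule, so it is a property of the system/communication graph.) *)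

(* Defs.v *)
From Stdlib Require Import Reals.
From mathcomp Require Import all_boot.

Set Implicit Arguments.
Unset Strict Implicit.
Unset Printing Implicit Defensive.

Local Open Scope R_scope.

Section System.
Variable n : nat.
Variable c : 'I_n -> R * R.   (* centres of the unit circles C_1..C_n *)
Variable r : R.

Definition cdist (i j : 'I_n) : R :=
  sqrt ((fst (c j) - fst (c i)) ^ 2 + (snd (c j) - snd (c i)) ^ 2).

Definition disjoint_circles : Prop :=
  forall i j : 'I_n, i <> j -> 2 < cdist i j.

Definition comm_adj : rel 'I_n :=
  fun i j => (i != j) && (if Rle_dec (cdist i j) (2 + r) then true else false).

Definition point_at (i : 'I_n) (theta : R) : R * R :=
  (fst (c i) + cos theta, snd (c i) + sin theta).

(* the point of C_i closest to C_j (its angle is the link position phi_ij) *)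
Definition closest_point (i j : 'I_n) : R * R :=
  (fst (c i) + (fst (c j) - fst (c i)) / cdist i j,
   snd (c i) + (snd (c j) - snd (c i)) / cdist i j).

(* the link positions on each circle are pairwise distinct
   (implicit well-definedness assumption) *)
Definition distinct_links : Prop :=
  forall i j k : 'I_n, comm_adj i j -> comm_adj i k -> j <> k ->
    closest_point i j <> closest_point i k.

Record schedule := Schedule { sch_f : 'I_n -> R ; sch_g : 'I_n -> R }.

Definition is_schedule (F : schedule) : Prop :=
  forall i, sch_g F i = 1 \/ sch_g F i = -1.

Definition robot_angle (F : schedule) (i : 'I_n) (t : R) : R :=
  sch_f F i + sch_g F i * (2 * PI * t).

Definition robot_point (F : schedule) (i : 'I_n) (t : R) : R * R :=
  point_at i (robot_angle F i t).

Definition at_link (F : schedule) (i j : 'I_n) (t : R) : Prop :=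
  robot_point F i t = closest_point i j.

Definition sync_schedule (F : schedule) : Prop :=
  is_schedule F /\
  (forall i j, comm_adj i j -> sch_g F i = - sch_g F j) /\
  (forall i j, comm_adj i j -> forall t, at_link F i j t <-> at_link F j i t).

(* Partial SCS executions.  Robots are named by their initial circle.       *)
(* A state maps each robot to Some (circle it is on) or None (has left).    *)
(* L = set of robots that leave, tau rb = time at which robot rb leaves.    *)
Definition state := 'I_n -> option 'I_n.

Definition init_state : state := fun rb => Some rb.

Definition departed (L : {set 'I_n}) (tau : 'I_n -> R) (rb : 'I_n) (t : R) : Prop :=
  rb \in L /\ tau rb <= t.

(* circle j is empty at time t (robots leaving at time t are gone) *)
Definition empty_circle (L : {set 'I_n}) (tau : 'I_n -> R) (s : state) (t : R)
    (j : 'I_n) : Prop :=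
  forall rb, s rb = Some j -> departed L tau rb t.

(* the state at time t, given the state s just before time t *)
Definition step_ok (F : schedule) (L : {set 'I_n}) (tau : 'I_n -> R) (t : R)
    (s s' : state) : Prop :=
  forall rb,
    (departed L tau rb t -> s' rb = None) /\
    (~ departed L tau rb t ->
       (s rb = None -> s' rb = None) /\
       (forall i, s rb = Some i ->
          (exists j, comm_adj i j /\ at_link F i j t /\
                     empty_circle L tau s t j /\ s' rb = Some j) \/
          ((forall j, comm_adj i j -> at_link F i j t ->
                      ~ empty_circle L tau s t j) /\ s' rb = Some i))).

(* loc t = state at time t (for t >= 0): right-continuous, with left limits,
   and the state at t obtained from the left limit by the switching rule. *)
Definition execution (F : schedule) (L : {set 'I_n}) (tau : 'I_n -> R)
    (loc : R -> state) : Prop :=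
  step_ok F L tau 0 init_state (loc 0) /\
  (forall t, 0 < t -> exists (eps : R) (s : state), 0 < eps <= t /\
       (forall u, t - eps < u < t -> loc u = s) /\ step_ok F L tau t s (loc t)) /\
  (forall t, 0 <= t -> exists eps : R, 0 < eps /\
       forall u, t <= u < t + eps -> loc u = loc t).

Definition visited (F : schedule) (loc : R -> state) (i : 'I_n) (theta t : R)
    : Prop :=
  exists rb, loc t rb = Some i /\ robot_point F i t = point_at i theta.

Definition covered (F : schedule) (loc : R -> state) (i : 'I_n) : Prop :=
  forall theta, exists p T0 : R, 0 < p /\
    forall m : nat, exists t, T0 + INR m * p <= t < T0 + INR (S m) * p /\
      visited F loc i theta t.

Definition resilient (F : schedule) (k : nat) : Prop :=
  forall (L : {set 'I_n}) (tau : 'I_n -> R) (loc : R -> state),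
    #|L| = k -> (forall rb, rb \in L -> 0 <= tau rb) ->
    execution F L tau loc -> forall i, covered F loc i.

Definition uncovering_resilience (F : schedule) (k : nat) : Prop :=
  (k <= n)%N /\ resilient F k /\
  (forall k' : nat, (k < k' <= n)%N -> ~ resilient F k').

End System.

Definition connected_graph (n : nat) (e : rel 'I_n) : Prop :=
  forall i j, connect e i j.

Definition acyclic_graph (n : nat) (e : rel 'I_n) : Prop :=
  forall s : seq 'I_n, (3 <= size s)%N -> uniq s -> ~~ cycle e s.

Definition is_tree (n : nat) (e : rel 'I_n) : Prop :=
  connected_graph e /\ acyclic_graph e.

(* Main.v *)
Require Import Defs.
From Stdlib Require Import Reals Lra Lia Classical ClassicalEpsilon.
From mathcomp Require Import all_boot.
From mathcomp Require Import zify.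
Set Implicit Arguments. Unset Strict Implicit.
Local Open Scope R_scope.

Lemma cos_2kpi (z : Z) : cos (2 * PI * IZR z) = 1 /\ sin (2 * PI * IZR z) = 0.
Proof.
  assert (Hs : sin (IZR z * PI) = 0) by (apply sin_eq_0_1; now exists z).
  assert (Hs2 : sin (2 * PI * IZR z) = 0).
  { replace (2 * PI * IZR z) with (IZR (2*z) * PI) by (rewrite mult_IZR; ring).
    apply sin_eq_0_1; now exists (2*z)%Z. }
  split; auto.
  replace (2 * PI * IZR z) with (2 * (IZR z * PI)) by ring.
  rewrite cos_2a_sin Hs. ring.
Qed.

Lemma cos_sin_per a (z : Z) : cos (a + 2 * PI * IZR z) = cos a /\ sin (a + 2 * PI * IZR z) = sin a.
Proof.
  destruct (cos_2kpi z) as [H1 H2].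
  rewrite cos_plus sin_plus H1 H2. split; ring.
Qed.

Lemma cos_sin_eq a b : cos a = cos b -> sin a = sin b -> exists z : Z, a - b = 2 * PI * IZR z.
Proof.
  intros Hc Hs.
  assert (H1 : cos (a - b) = 1).
  { rewrite cos_minus Hc Hs. rewrite <- (sin2_cos2 b). unfold Rsqr. ring. }
  assert (H2 : sin ((a - b)/2) = 0).
  { replace (a - b) with (2 * ((a-b)/2)) in H1 by field.
    rewrite cos_2a_sin in H1.
    assert (sin ((a - b) / 2) * sin ((a - b) / 2) = 0) by lra.
    destruct (Rmult_integral _ _ H); auto. }
  destruct (sin_eq_0_0 _ H2) as [k Hk]. exists k. lra.
Qed.

Lemma real_ind (a : R) (P : R -> Prop) :
  P a ->
  (forall t, a <= t -> P t -> exists e, 0 < e /\ forall u, t <= u < t + e -> P u) ->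
  (forall t, a < t -> (forall u, a <= u < t -> P u) -> P t) ->
  forall t, a <= t -> P t.
Proof.
  intros Ha Hr Hl b Hb.
  destruct (classic (P b)) as [|Hnb]; auto. exfalso.
  set (E := fun x => a <= x <= b /\ forall u, a <= u <= x -> P u).
  assert (HE : bound E) by (exists b; intros x [Hx _]; lra).
  assert (Hne : exists x, E x).
  { exists a. split. lra. intros u Hu. replace u with a by lra. auto. }
  destruct (completeness E HE Hne) as [m [Hub Hlub]].
  assert (Ham : a <= m) by (apply Hub; split; [lra|]; intros u Hu; replace u with a by lra; auto).
  assert (Hmb : m <= b) by (apply Hlub; intros x [Hx _]; lra).
  assert (Hlt : forall u, a <= u < m -> P u).
  { intros u [Hu1 Hu2].
    destruct (classic (exists x, E x /\ u <= x)) as [[x [[Hx1 Hx2] Hux]]|Hno].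
    - apply Hx2; lra.
    - exfalso. assert (m <= u); [|lra]. apply Hlub. intros x Ex.
      destruct (Rle_lt_dec x u) as [|Hxu]; auto. exfalso; apply Hno; exists x; split; auto; lra. }
  assert (Pm : P m).
  { destruct (Rle_lt_or_eq_dec _ _ Ham) as [Hlt'|Heq]. apply Hl; auto. subst m; auto. }
  destruct (Hr m Ham Pm) as [e [He HPe]].
  assert (Hx : E (Rmin (m + e/2) b)).
  { split. split; [unfold Rmin; destruct (Rle_dec (m+e/2) b); lra | apply Rmin_r].
    intros u Hu. destruct (Rlt_le_dec u m). apply Hlt; lra.
    apply HPe. split; auto. assert (u <= m + e/2) by (eapply Rle_trans; [apply Hu| apply Rmin_l]). lra. }
  assert (Rmin (m + e/2) b <= m) by (apply Hub; auto).
  unfold Rmin in H; destruct (Rle_dec (m+e/2) b). lra.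
  assert (b = m) by lra. subst. auto.
Qed.

Lemma foldmax_ge (T : eqType) (f : T -> R) (l : seq T) x :
  x \in l -> f x <= foldr (fun k acc => Rmax (f k) acc) 0 l.
Proof.
  elim: l => [|a l IH]; first by rewrite in_nil.
  rewrite in_cons => /orP [/eqP ->|Hx] /=. apply Rmax_l.
  eapply Rle_trans; [apply IH; auto| apply Rmax_r].
Qed.

Lemma foldmax_pos (T : eqType) (f : T -> R) (l : seq T) :
  0 <= foldr (fun k acc => Rmax (f k) acc) 0 l.
Proof. elim: l => [|a l IH] /=. lra. eapply Rle_trans; [apply IH| apply Rmax_r]. Qed.


Section Geo.
Variables (n : nat) (c : 'I_n -> R * R) (r : R) (F : schedule n).
Hypothesis Hdisj : disjoint_circles c.
Hypothesis Hsync : sync_schedule c r F.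

Notation adj := (comm_adj c r).
Notation link := (at_link c F).

Lemma pt_eq i a b : point_at c i a = point_at c i b -> exists z : Z, a - b = 2 * PI * IZR z.
Proof.
  unfold point_at; intros H. injection H; intros. apply cos_sin_eq; lra.
Qed.

Lemma pt_per i a z : point_at c i (a + 2 * PI * IZR z) = point_at c i a.
Proof. unfold point_at. destruct (cos_sin_per a z) as [-> ->]. reflexivity. Qed.

Lemma adj_neq i j : adj i j -> i <> j.
Proof. unfold comm_adj. move=> /andP [H _] E. by rewrite E eqxx in H. Qed.

Lemma cdist_sym i j : cdist c i j = cdist c j i.
Proof. unfold cdist. f_equal. ring. Qed.

Lemma adj_sym i j : adj i j -> adj j i.
Proof.
  unfold comm_adj. move=> /andP [H1 H2]. apply/andP; split.
  by rewrite eq_sym. by rewrite cdist_sym.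
Qed.

Lemma closest_angle i j : i <> j -> exists phi, closest_point c i j = point_at c i phi.
Proof.
  intros Hij.
  have Hd := Hdisj Hij.
  set (dx := fst (c j) - fst (c i)). set (dy := snd (c j) - snd (c i)).
  set (d := cdist c i j) in *.
  assert (Hd2 : d * d = dx * dx + dy * dy).
  { unfold d, cdist. rewrite sqrt_sqrt. fold dx dy; ring. fold dx dy; nra. }
  set (x := dx / d). set (y := dy / d).
  assert (Hxy : x * x + y * y = 1).
  { unfold x, y. field_simplify_eq. lra. lra. }
  assert (Hx : -1 <= x <= 1) by nra.
  destruct (Rle_lt_dec 0 y) as [Hy|Hy].
  - exists (acos x). unfold point_at, closest_point. fold d dx dy x y.
    rewrite cos_acos; auto. rewrite sin_acos; auto. f_equal. f_equal.
    replace (1 - x²) with (y * y) by (unfold Rsqr; lra). rewrite sqrt_square; auto.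
  - exists (- acos x). unfold point_at, closest_point. fold d dx dy x y.
    rewrite cos_neg sin_neg cos_acos; auto. rewrite sin_acos; auto. f_equal. f_equal.
    replace (1 - x²) with ((-y) * (-y)) by (unfold Rsqr; lra). rewrite sqrt_square; lra.
Qed.

Lemma g_pm i : sch_g F i = 1 \/ sch_g F i = -1.
Proof. destruct Hsync as [H _]. apply H. Qed.

Lemma rp_per i t z : robot_point c F i (t + IZR z) = robot_point c F i t.
Proof.
  unfold robot_point, robot_angle. destruct (g_pm i) as [-> | ->].
  - replace (sch_f F i + 1 * (2 * PI * (t + IZR z))) with
      ((sch_f F i + 1 * (2 * PI * t)) + 2 * PI * IZR z) by ring. apply pt_per.
  - replace (sch_f F i + -1 * (2 * PI * (t + IZR z))) with
      ((sch_f F i + -1 * (2 * PI * t)) + 2 * PI * IZR (- z)) by (rewrite opp_IZR; ring). apply pt_per.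
Qed.

Lemma rp_surj i theta : exists u, robot_point c F i u = point_at c i theta.
Proof.
  exists (sch_g F i * (theta - sch_f F i) / (2 * PI)).
  unfold robot_point, robot_angle. f_equal.
  have HP := PI_RGT_0.
  destruct (g_pm i) as [-> | ->]; field; lra.
Qed.

Lemma rp_res i t t' : robot_point c F i t = robot_point c F i t' -> exists z : Z, t' = t + IZR z.
Proof.
  unfold robot_point, robot_angle. move=> /pt_eq [z Hz].
  have HP := PI_RGT_0.
  destruct (g_pm i) as [E | E]; rewrite E in Hz.
  - exists (- z)%Z. rewrite opp_IZR. apply (Rmult_eq_reg_l (2 * PI)); [|lra]. lra.
  - exists z. apply (Rmult_eq_reg_l (2 * PI)); [|lra]. lra.
Qed.

Lemma link_per i j t z : link i j t -> link i j (t + IZR z).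
Proof. unfold at_link. by rewrite (rp_per i t z). Qed.

Lemma link_per' i j t z : link i j (t + IZR z) -> link i j t.
Proof. unfold at_link. by rewrite (rp_per i t z). Qed.

Lemma link_res i j t t' : link i j t -> link i j t' -> exists z : Z, t' = t + IZR z.
Proof. unfold at_link. intros H1 H2. apply (@rp_res i t t'). by rewrite H1 H2. Qed.

Lemma link_ex i j : adj i j -> exists t, link i j t.
Proof.
  intros H. destruct (closest_angle (adj_neq H)) as [phi Hphi].
  destruct (rp_surj i phi) as [u Hu]. exists u. unfold at_link. by rewrite Hu Hphi.
Qed.

Lemma link_sym i j t : adj i j -> (link i j t <-> link j i t).
Proof. intros Ha. destruct Hsync as [_ [_ H]]. exact (H i j Ha t). Qed.

Lemma next_link_edge i j t : adj i j ->
  exists t', t < t' <= t + 1 /\ link i j t' /\ forall s, t < s < t' -> ~ link i j s.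
Proof.
  intros H. destruct (link_ex H) as [t0 H0].
  exists (t0 + IZR (up (t - t0))).
  destruct (archimed (t - t0)) as [A1 A2].
  split. lra. split. by apply link_per.
  intros s Hs Hl. destruct (link_res H0 Hl) as [z Hz].
  assert (Hzl : (z < up (t - t0))%Z) by (apply lt_IZR; lra).
  assert (Hz2 : IZR z <= IZR (up (t - t0)) - 1).
  { replace (IZR (up (t - t0)) - 1) with (IZR (up (t - t0) - 1)) by (rewrite minus_IZR; ring).
    apply IZR_le. lia. }
  lra.
Qed.

Lemma prev_free_edge i j u : adj i j ->
  exists w, w < u /\ forall s, w < s < u -> ~ link i j s.
Proof.
  intros H. destruct (next_link_edge (u - 1) H) as [t' [Ht' [Hl Hmin]]].
  destruct (Rlt_le_dec t' u) as [Hlt|Hge].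
  - exists t'. split; auto. intros s Hs Hls.
    destruct (link_res Hl Hls) as [z Hz].
    assert (0 < IZR z < 1) by lra. destruct H0 as [H1 H2].
    apply lt_IZR in H1. apply lt_IZR in H2. lia.
  - exists (u - 1). split. lra. intros s Hs. apply Hmin. lra.
Qed.


Hypothesis Hdl : distinct_links c r.

Lemma link_uniq i j k t : adj i j -> adj i k -> link i j t -> link i k t -> j = k.
Proof.
  intros H1 H2 L1 L2. destruct (classic (j = k)) as [|Hne]; auto. exfalso.
  apply (Hdl H1 H2 Hne). unfold at_link in *. by rewrite -L1 -L2.
Qed.

Lemma next_link_l i t (l : seq 'I_n) : (exists j, j \in l /\ adj i j) ->
  exists t', t < t' /\ (exists k, adj i k /\ link i k t') /\
    forall s, t < s < t' -> forall k, k \in l -> adj i k -> ~ link i k s.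
Proof.
  elim: l => [|a l IH] [j [Hj Ha]]; first by rewrite in_nil in Hj.
  destruct (classic (exists j, j \in l /\ adj i j)) as [Hex|Hno].
  - destruct (IH Hex) as [t1 [Ht1 [[k1 [Hk1 Lk1]] Hm1]]].
    case Hia: (adj i a).
    + destruct (next_link_edge t Hia) as [t2 [Ht2 [L2 Hm2]]].
      destruct (Rle_lt_dec t1 t2) as [Hle|Hlt].
      * exists t1. split; auto. split. exists k1; auto.
        intros s Hs k; rewrite in_cons => /orP [/eqP ->|Hk] Hik.
        apply Hm2; lra. apply Hm1; auto.
      * exists t2. split. lra. split. exists a; auto.
        intros s Hs k; rewrite in_cons => /orP [/eqP ->|Hk] Hik.
        apply Hm2; lra. apply Hm1; auto; lra.
    + exists t1. split; auto. split. exists k1; auto.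
      intros s Hs k; rewrite in_cons => /orP [/eqP ->|Hk] Hik.
      by rewrite Hia in Hik. apply Hm1; auto.
  - assert (Hja : j = a).
    { move: Hj; rewrite in_cons => /orP [/eqP //|Hj]. exfalso; apply Hno; exists j; auto. }
    subst j.
    destruct (next_link_edge t Ha) as [t2 [Ht2 [L2 Hm2]]].
    exists t2. split. lra. split. exists a; auto.
    intros s Hs k; rewrite in_cons => /orP [/eqP ->|Hk] Hik.
    apply Hm2; lra. exfalso; apply Hno; exists k; auto.
Qed.

Lemma next_link i t : (exists j, adj i j) ->
  exists t', t < t' /\ (exists k, adj i k /\ link i k t') /\
    forall s, t < s < t' -> forall k, adj i k -> ~ link i k s.
Proof.
  intros [j Hj]. destruct (@next_link_l i t (enum 'I_n)) as [t' [H1 [H2 H3]]].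
  exists j; split; auto; by rewrite mem_enum.
  exists t'; split; auto; split; auto. intros s Hs k. apply H3; auto. by rewrite mem_enum.
Qed.

Lemma prev_free_l i u (l : seq 'I_n) :
  exists w, w < u /\ forall s, w < s < u -> forall k, k \in l -> adj i k -> ~ link i k s.
Proof.
  elim: l => [|a l [w1 [Hw1 Hm1]]].
  - exists (u - 1). split. lra. intros s _ k; by rewrite in_nil.
  - case Hia: (adj i a).
    + destruct (prev_free_edge u Hia) as [w2 [Hw2 Hm2]].
      exists (Rmax w1 w2). split. unfold Rmax; destruct (Rle_dec w1 w2); lra.
      have M1 := Rmax_l w1 w2. have M2 := Rmax_r w1 w2.
      intros s Hs k; rewrite in_cons => /orP [/eqP ->|Hk] Hik.
      apply Hm2; lra. apply Hm1; auto; lra.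
    + exists w1. split; auto.
      intros s Hs k; rewrite in_cons => /orP [/eqP ->|Hk] Hik.
      by rewrite Hia in Hik. apply Hm1; auto.
Qed.

Lemma prev_free i u :
  exists w, w < u /\ forall s, w < s < u -> forall k, adj i k -> ~ link i k s.
Proof.
  destruct (@prev_free_l i u (enum 'I_n)) as [w [H1 H2]].
  exists w; split; auto. intros s Hs k. apply H2; auto. by rewrite mem_enum.
Qed.



Section Dyn.
Variables (L : {set 'I_n}) (tau : 'I_n -> R) (loc : R -> state n) (rb0 : 'I_n).
Hypothesis Htau : forall rb, rb \in L -> 0 <= tau rb.
Hypothesis Hexe : execution c r F L tau loc.
Hypothesis Hrb0 : rb0 \notin L.
Hypothesis Hrb0u : forall rb, rb \notin L -> rb = rb0.

Notation step := (step_ok c r F L tau).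

Definition Tst := foldr (fun k acc => Rmax (tau k) acc) 0 (enum L).

Lemma Tst_ge rb : rb \in L -> tau rb <= Tst.
Proof. intros H. apply foldmax_ge. by rewrite mem_enum. Qed.

Lemma Tst_pos : 0 <= Tst.
Proof. apply foldmax_pos. Qed.

Lemma loc_step t : 0 <= t -> exists s, step t s (loc t) /\
  (0 < t -> exists eps, 0 < eps <= t /\ forall u, t - eps < u < t -> loc u = s) /\
  (t = 0 -> s = @init_state n).
Proof.
  intros Ht. destruct Hexe as [H0 [Hl Hr]].
  destruct (Rle_lt_or_eq_dec _ _ Ht) as [Hlt|Heq].
  - destruct (Hl t Hlt) as [eps [s [He [Hs Hst]]]]. exists s. split; auto. split.
    intros _. exists eps; auto. intros; lra.
  - subst t. exists (@init_state n). split; auto. split; auto. intros; lra.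
Qed.

Lemma gone rb t : rb \in L -> 0 <= t -> tau rb <= t -> loc t rb = None.
Proof.
  intros HL Ht Htt. destruct (loc_step Ht) as [s [Hs _]].
  destruct (Hs rb) as [H _]. apply H. split; auto.
Qed.

Lemma not_dep t : ~ departed L tau rb0 t.
Proof. intros [H _]. move: Hrb0. by rewrite H. Qed.

Lemma step_some t s s' i : step t s s' -> s rb0 = Some i -> exists j, s' rb0 = Some j.
Proof.
  intros Hs Hi. destruct (Hs rb0) as [_ H]. destruct (H (@not_dep t)) as [_ H2].
  destruct (H2 i Hi) as [[j [_ [_ [_ ->]]]]|[_ ->]]; eauto.
Qed.

Lemma alive t : 0 <= t -> exists j, loc t rb0 = Some j.
Proof.
  revert t. apply (real_ind (P := fun t => exists j, loc t rb0 = Some j)).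
  - destruct (loc_step (Rle_refl 0)) as [s [Hs [_ H0]]]. rewrite H0 in Hs; auto.
    eapply step_some; eauto. reflexivity.
  - intros t Ht Hj. destruct Hexe as [_ [_ Hr]]. destruct (Hr t Ht) as [e [He H]].
    exists e; split; auto. intros u Hu. rewrite H; auto.
  - intros t Ht IH. destruct (loc_step (Rlt_le _ _ Ht)) as [s [Hs [Hl _]]].
    destruct (Hl Ht) as [eps [He Heps]].
    destruct (IH (t - eps/2)) as [i Hi]. lra.
    rewrite Heps in Hi. eapply step_some; eauto. lra.
Qed.

Lemma left_others t : Tst < t -> exists s eps, 0 < eps /\
  (forall u, t - eps < u < t -> loc u = s) /\ step t s (loc t) /\
  forall rb, rb <> rb0 -> s rb = None.
Proof.
  intros Ht. have HT := Tst_pos.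
  destruct (loc_step (Rlt_le _ _ (Rle_lt_trans _ _ _ HT Ht))) as [s [Hs [Hl _]]].
  destruct (Hl ltac:(lra)) as [eps [He Heps]].
  exists s, eps. split. lra. split; auto. split; auto.
  intros rb Hrb. assert (HL : rb \in L).
  { case: (boolP (rb \in L)) => // Hn. exfalso. apply Hrb. by apply Hrb0u. }
  set (u := Rmax (t - eps/2) ((Tst + t)/2)).
  have M1 := Rmax_l (t - eps/2) ((Tst + t)/2). have M2 := Rmax_r (t - eps/2) ((Tst + t)/2).
  assert (Hu : u < t) by (unfold u, Rmax; destruct (Rle_dec (t - eps/2) ((Tst+t)/2)); lra).
  fold u in M1, M2. have := Tst_ge HL. intros HTL.
  rewrite -(Heps u); [|lra]. apply gone; auto; lra.
Qed.

Lemma step_move t s i k : step t s (loc t) -> s rb0 = Some i ->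
  (forall rb, rb <> rb0 -> s rb = None) -> adj i k -> link i k t -> loc t rb0 = Some k.
Proof.
  intros Hs Hi Ho Hik Hl. destruct (Hs rb0) as [_ H]. destruct (H (@not_dep t)) as [_ H2].
  assert (Hemp : empty_circle L tau s t k).
  { intros rb Hrb. destruct (classic (rb = rb0)) as [->|Hne].
    - rewrite Hi in Hrb. injection Hrb; intros ->. by case: (adj_neq Hik).
    - by rewrite Ho in Hrb. }
  destruct (H2 i Hi) as [[j [Hj [Lj [_ ->]]]]|[Hn _]].
  - by rewrite (link_uniq Hj Hik Lj Hl).
  - exfalso. exact (Hn k Hik Hl Hemp).
Qed.

Lemma step_stay t s i : step t s (loc t) -> s rb0 = Some i ->
  (forall k, adj i k -> ~ link i k t) -> loc t rb0 = Some i.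
Proof.
  intros Hs Hi Hno. destruct (Hs rb0) as [_ H]. destruct (H (@not_dep t)) as [_ H2].
  destruct (H2 i Hi) as [[j [Hj [Lj _]]]|[_ ->]]; auto.
  exfalso; exact (Hno j Hj Lj).
Qed.

Lemma stay j t0 t1 : Tst < t0 -> loc t0 rb0 = Some j ->
  (forall s k, t0 < s < t1 -> adj j k -> ~ link j k s) ->
  forall s, t0 <= s -> s < t1 -> loc s rb0 = Some j.
Proof.
  intros HT H0 Hno. apply (real_ind (P := fun s => s < t1 -> loc s rb0 = Some j)).
  - auto.
  - intros t Ht Hj. destruct (Rlt_le_dec t t1) as [Hlt|Hge].
    + destruct Hexe as [_ [_ Hr]]. destruct (Hr t ltac:(have := Tst_pos; lra)) as [e [He H]].
      exists e; split; auto. intros u Hu _. rewrite H; auto.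
    + exists 1; split. lra. intros u Hu Hu1. lra.
  - intros t Ht IH Ht1.
    destruct (@left_others t ltac:(lra)) as [s [eps [He [Hs [Hst Ho]]]]].
    set (u := Rmax (t - eps/2) ((t0 + t)/2)).
    have M1 := Rmax_l (t - eps/2) ((t0 + t)/2). have M2 := Rmax_r (t - eps/2) ((t0 + t)/2).
    assert (Hu : u < t) by (unfold u, Rmax; destruct (Rle_dec (t - eps/2) ((t0+t)/2)); lra).
    fold u in M1, M2.
    assert (Hsu : s rb0 = Some j) by (rewrite -(Hs u); [apply IH|]; lra).
    apply (step_stay Hst Hsu). intros k Hk. apply Hno; auto; lra.
Qed.

Lemma jump j k t0 t1 : Tst < t0 -> t0 < t1 -> loc t0 rb0 = Some j ->
  (forall s k, t0 < s < t1 -> adj j k -> ~ link j k s) ->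
  adj j k -> link j k t1 -> loc t1 rb0 = Some k.
Proof.
  intros HT H01 H0 Hno Hjk Hl.
  destruct (@left_others t1 ltac:(lra)) as [s [eps [He [Hs [Hst Ho]]]]].
  set (u := Rmax (t1 - eps/2) ((t0 + t1)/2)).
  have M1 := Rmax_l (t1 - eps/2) ((t0 + t1)/2). have M2 := Rmax_r (t1 - eps/2) ((t0 + t1)/2).
  assert (Hu : u < t1) by (unfold u, Rmax; destruct (Rle_dec (t1 - eps/2) ((t0+t1)/2)); lra).
  fold u in M1, M2.
  assert (Hsu : s rb0 = Some j) by (rewrite -(Hs u); [apply (stay HT H0 Hno)|]; lra).
  exact (step_move Hst Hsu Ho Hjk Hl).
Qed.



Section Traj.
Hypothesis Htree : is_tree (comm_adj c r).
Hypothesis Hn2 : (1 < n)%N.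

Notation Ts := Tst.

Lemma has_nb i : exists j, adj i j.
Proof.
  have H0 : (0 < n)%N by apply: ltn_trans Hn2.
  set k0 := Ordinal H0. set k1 := Ordinal Hn2.
  have [j Hj] : exists j, j != i.
  { case: (eqVneq k0 i) => [E|E]; last by exists k0.
    exists k1. rewrite -E. apply/eqP => /(congr1 val) /=. done. }
  destruct Htree as [Hc _]. move: (Hc i j) => /connectP [p Hp Hl].
  case: p Hp Hl => [|a p] /=.
  - move=> _ E. by rewrite E eqxx in Hj.
  - move=> /andP [Ha _] _. by exists a.
Qed.

Definition nspec i t (p : R * 'I_n) := t < p.1 /\ adj i p.2 /\ link i p.2 p.1 /\
  forall s, t < s < p.1 -> forall k, adj i k -> ~ link i k s.

Lemma nspec_ex i t : exists p, nspec i t p.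
Proof.
  destruct (@next_link i t (has_nb i)) as [t' [H1 [[k [Hk Lk]] H3]]].
  exists (t', k). repeat split; auto.
Qed.

Definition nxt i t : R * 'I_n := proj1_sig (constructive_indefinite_description _ (nspec_ex i t)).

Lemma nxt_spec i t : nspec i t (nxt i t).
Proof. unfold nxt. apply proj2_sig. Qed.

Lemma nspec_uniq i t p q : nspec i t p -> nspec i t q -> p = q.
Proof.
  destruct p as [p1 p2], q as [q1 q2]. intros [H1 [H2 [H3 H4]]] [G1 [G2 [G3 G4]]]; simpl in *.
  assert (E : p1 = q1).
  { destruct (Rtotal_order p1 q1) as [Hlt|[Heq|Hgt]]; auto.
    - exfalso. exact (G4 p1 ltac:(lra) p2 H2 H3).
    - exfalso. exact (H4 q1 ltac:(lra) q2 G2 G3). }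
  subst q1. f_equal. exact (link_uniq H2 G2 H3 G3).
Qed.

Lemma nspec_shift i t p z : nspec i t p -> nspec i (t + IZR z) (p.1 + IZR z, p.2).
Proof.
  destruct p as [p1 p2]. intros [H1 [H2 [H3 H4]]]; simpl in *.
  split; simpl. lra. split; auto. split. by apply link_per.
  intros s Hs k Hk Hl. apply (H4 (s - IZR z) ltac:(lra) k Hk).
  apply (@link_per' i k (s - IZR z) z). by replace (s - IZR z + IZR z) with s by ring.
Qed.

Variable j0 : 'I_n.
Hypothesis Hj0 : loc (Ts + 1) rb0 = Some j0.

Fixpoint tr (m : nat) : R * 'I_n :=
  match m with O => (Ts + 1, j0) | S m' => nxt (tr m').2 (tr m').1 end.

Lemma tr_S m : nspec (tr m).2 (tr m).1 (tr (S m)).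
Proof. apply nxt_spec. Qed.

Lemma tr_lt m : (tr m).1 < (tr (S m)).1.
Proof. by destruct (tr_S m) as [H _]. Qed.

Lemma tr_loc m : Ts < (tr m).1 /\ loc (tr m).1 rb0 = Some (tr m).2.
Proof.
  elim: m => [|m [IH1 IH2]]; first (simpl; split; auto; lra).
  have [H1 [H2 [H3 H4]]] := tr_S m.
  split. lra.
  apply (jump IH1 H1 IH2); auto.
Qed.

Lemma tr_int m s : (tr m).1 <= s < (tr (S m)).1 -> loc s rb0 = Some (tr m).2.
Proof.
  intros Hs. have [IH1 IH2] := tr_loc m. have [H1 [H2 [H3 H4]]] := tr_S m.
  apply (stay IH1 IH2 (t1 := (tr (S m)).1)); try lra.
  intros s0 k Hs0 Hk. apply H4; auto.
Qed.

Lemma tr_mono m k : (tr m).1 <= (tr (m + k)).1.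
Proof.
  elim: k => [|k IH]. rewrite addn0; lra.
  rewrite addnS. have := tr_lt (m + k). lra.
Qed.

Lemma tr_smono m k : (tr m).1 < (tr (m + k.+1)).1.
Proof. rewrite addnS. have := tr_lt (m + k). have := tr_mono m k. lra. Qed.

Lemma pig : exists a b, (a < b)%N /\ (tr a).2 = (tr b).2 /\ (tr (S a)).2 = (tr (S b)).2.
Proof.
  set N := #|{: 'I_n * 'I_n}|.
  set f := fun x : 'I_N.+1 => ((tr x).2, (tr (S x)).2).
  destruct (classic (injective f)) as [Hinj|Hni].
  - exfalso. have := leq_card f Hinj. rewrite card_ord. fold N. by rewrite ltnn.
  - apply NNPP => Hno. apply Hni => x y Hxy.
    case: (ltngtP x y) => [Hlt|Hgt|Heq].
    + exfalso; apply Hno. exists x, y. split; auto. split; [exact (congr1 fst Hxy)|exact (congr1 snd Hxy)].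
    + exfalso; apply Hno. exists y, x. split; auto. split; [exact (esym (congr1 fst Hxy))|exact (esym (congr1 snd Hxy))].
    + by apply val_inj.
Qed.




Definition cc m := (tr m).2.
Definition tt m := (tr m).1.
Arguments cc : simpl never.
Arguments tt : simpl never.

Lemma ccS_adj m : adj (cc m) (cc m.+1).
Proof. by have [_ [H _]] := tr_S m. Qed.
Lemma ccS_link m : link (cc m) (cc m.+1) (tt m.+1).
Proof. by have [_ [_ [H _]]] := tr_S m. Qed.
Lemma ccS_nolink m s k : tt m < s < tt m.+1 -> adj (cc m) k -> ~ link (cc m) k s.
Proof. have [_ [_ [_ H]]] := tr_S m. intros; by apply H. Qed.
Lemma tt_lt m : tt m < tt m.+1.
Proof. apply tr_lt. Qed.
Lemma cc_loc m s : tt m <= s < tt m.+1 -> loc s rb0 = Some (cc m).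
Proof. apply tr_int. Qed.

Lemma per_ex : exists A P z, (0 < P)%N /\ (1 <= z)%Z /\
  forall m, (A <= m)%N -> cc (m + P) = cc m /\ tt (m + P) = tt m + IZR z.
Proof.
  destruct pig as [a [b [Hab [E1 E2]]]].
  have L1 := ccS_link a. have L2 := ccS_link b.
  rewrite /cc -E1 -E2 in L2. fold (cc a) (cc a.+1) in L2.
  destruct (link_res L1 L2) as [z Hz].
  assert (Hk : forall k, tr (a.+1 + k + (b - a)) = (tt (a.+1 + k) + IZR z, cc (a.+1 + k))).
  { elim => [|k IH].
    - rewrite addn0. have -> : (a.+1 + (b - a) = b.+1)%N by lia.
      rewrite (surjective_pairing (tr b.+1)). fold (tt b.+1). rewrite Hz. f_equal.
      by rewrite /cc -E2.
    - have -> : (a.+1 + k.+1 + (b - a) = (a.+1 + k + (b - a)).+1)%N by lia.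
      have -> : (a.+1 + k.+1 = (a.+1 + k).+1)%N by lia.
      change (tr (a.+1 + k + (b - a)).+1) with (nxt (tr (a.+1 + k + (b - a))).2 (tr (a.+1 + k + (b - a))).1).
      rewrite IH /=. apply esym. apply nspec_uniq with (cc (a.+1 + k)) (tt (a.+1 + k) + IZR z).
      + exact: nspec_shift (tr_S _).
      + apply nxt_spec. }
  exists a.+1, (b - a)%N, z.
  assert (Hper : forall m, (a.+1 <= m)%N -> cc (m + (b - a)) = cc m /\ tt (m + (b - a)) = tt m + IZR z).
  { intros m Hm. have -> : m = (a.+1 + (m - a.+1))%N by lia.
    rewrite /cc /tt Hk. split; reflexivity. }
  split. lia. split; auto.
  have [_ H2] := Hper a.+1 (leqnn _).
  have Hb : (b - a = (b - a).-1.+1)%N by lia.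
  have := tr_smono a.+1 (b - a).-1. rewrite -Hb. fold (tt a.+1) (tt (a.+1 + (b - a))).
  rewrite H2 => Hlt.
  assert (0 < z)%Z by (apply lt_IZR; lra). lia.
Qed.

Section Per.
Variables (A P : nat) (z : Z).
Hypothesis HP : (0 < P)%N.
Hypothesis Hz : (1 <= z)%Z.
Hypothesis Hper : forall m, (A <= m)%N -> cc (m + P) = cc m /\ tt (m + P) = tt m + IZR z.

Lemma perk m k : (A <= m)%N -> cc (m + k * P) = cc m /\ tt (m + k * P) = tt m + INR k * IZR z.
Proof.
  move=> Hm. elim: k => [|k [IH1 IH2]].
  - rewrite mul0n addn0 /=. split; auto; lra.
  - have -> : (m + k.+1 * P = (m + k * P) + P)%N by rewrite mulSn; lia.
    have [H1 H2] := Hper (m := (m + k * P)%N) ltac:(lia).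
    rewrite H1 H2 IH1 IH2 S_INR. split; auto; ring.
Qed.

Lemma walk_path x d : path adj (cc x) [seq cc l | l <- iota x.+1 d].
Proof.
  elim: d x => [|d IH] x //=. apply/andP; split. apply ccS_adj. apply IH.
Qed.

Lemma walk_last x d : last (cc x) [seq cc l | l <- iota x.+1 d] = cc (x + d).
Proof.
  elim: d x => [|d IH] x /=. by rewrite addn0. rewrite IH. by rewrite addSnnS.
Qed.

Lemma ret m : (A <= m)%N -> exists m', (m < m')%N /\ cc m' = cc m.+1 /\ cc m'.+1 = cc m.
Proof.
  move=> Hm. set j := cc m. set k := cc m.+1.
  have Hjk : adj j k := ccS_adj m.
  have Hex : exists q, (m < q)%N && (cc q == j).
  { exists (m + P)%N. apply/andP; split. lia. have [-> _] := Hper Hm. by rewrite eqxx. }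
  case: (ex_minnP Hex) => q /andP [Hmq /eqP Hq] Hmin.
  have Hq1 : q <> m.+1.
  { move=> E. rewrite E in Hq. apply (adj_neq Hjk). by rewrite -Hq. }
  set d := (q - m.+2)%N.
  have Hqd : q = (m.+1 + d).+1 by rewrite /d; lia.
  set p := [seq cc l | l <- iota m.+2 d].
  have Hp : path adj k p := walk_path m.+1 d.
  have Hl : last k p = cc (m.+1 + d) := walk_last m.+1 d.
  have Hxj : adj (cc (m.+1 + d)) j.
  { have := ccS_adj (m.+1 + d). by rewrite -Hqd Hq. }
  case: (eqVneq (cc (m.+1 + d)) k) => Hxk.
  - exists (m.+1 + d)%N. split. lia. split; auto. by rewrite -Hqd.
  - exfalso.
    have Hnotin : forall y, y \in p -> y != j.
    { move=> y /mapP [l]. rewrite mem_iota => /andP [Hl1 Hl2] ->.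
      apply/eqP => Hlj. have := Hmin l. rewrite Hlj eqxx andbT.
      have -> : (m < l)%N by lia. move=> /(_ isT). lia. }
    destruct Htree as [_ Hacyc].
    move: Hl. case: (shortenP Hp) => p' Hp' Hu Hsub Hl'.
    have Hp'n : p' <> [::].
    { move=> E. rewrite E /= in Hl'. by rewrite Hl' eqxx in Hxk. }
    have Hsz : (3 <= size (j :: k :: p'))%N.
    { case: p' Hp'n {Hp' Hu Hsub Hl'} => [//|a p''] _ /=. lia. }
    have Hun : uniq (j :: k :: p').
    { rewrite cons_uniq Hu andbT in_cons negb_or. apply/andP; split.
      - apply/eqP => E. apply (adj_neq Hjk). exact E.
      - apply/negP => Hin. have := Hnotin j (Hsub j Hin). by rewrite eqxx. }
    have := Hacyc _ Hsz Hun. rewrite /cycle /= rcons_path Hjk Hp' Hl' Hxj. done.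
Qed.

Definition G j u := exists m, (A <= m)%N /\ cc m = j /\
  exists s, tt m <= s < tt m.+1 /\ exists y : Z, s = u + IZR y.

Lemma G_shift j u y : G j u -> G j (u + IZR y).
Proof.
  move=> [m [Hm [Hj [s [Hs [y0 Hy0]]]]]]. exists m. split; auto. split; auto.
  exists s. split; auto. exists (y0 - y)%Z. rewrite minus_IZR. lra.
Qed.

Lemma G_right j u : G j u -> exists e, 0 < e /\ forall v, u <= v < u + e -> G j v.
Proof.
  move=> [m [Hm [Hj [s [Hs [y0 Hy0]]]]]]. exists (tt m.+1 - s). split. lra.
  intros v Hv. exists m. split; auto. split; auto. exists (s + (v - u)). split. lra.
  exists y0. lra.
Qed.

Lemma G_left j u0 u : u0 < u -> (forall v, u0 <= v < u -> G j v) -> G j u.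
Proof.
  move=> Hu0 IH. destruct (prev_free j u) as [w [Hw Hwf]].
  set v := Rmax w ((u0 + u)/2).
  have M1 := Rmax_l w ((u0 + u)/2). have M2 := Rmax_r w ((u0 + u)/2). fold v in M1, M2.
  have Hvu : v < u by (unfold v, Rmax; destruct (Rle_dec w ((u0+u)/2)); lra).
  destruct (IH v ltac:(lra)) as [m [Hm [Hj [s [Hs [y Hy]]]]]].
  destruct (Rlt_le_dec (s + (u - v)) (tt m.+1)) as [Hlt|Hge].
  - exists m. split; auto. split; auto. exists (s + (u - v)). split. lra. exists y. lra.
  - have Lk := ccS_link m. rewrite Hj in Lk.
    have Lk' : link j (cc m.+1) (tt m.+1 + IZR (- y)) by apply link_per.
    rewrite opp_IZR in Lk'.
    have Hadj : adj j (cc m.+1) by rewrite -Hj; apply ccS_adj.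
    have Heq : tt m.+1 = u + IZR y.
    { destruct (Rle_lt_or_eq_dec (tt m.+1 + - IZR y) u ltac:(lra)) as [Hlt|Heq].
      - exfalso. exact (Hwf (tt m.+1 + - IZR y) ltac:(lra) _ Hadj Lk').
      - lra. }
    destruct (ret Hm) as [m' [Hmm' [E1 E2]]].
    have Lm := ccS_link m'. rewrite E1 E2 Hj in Lm.
    have Lm' : link j (cc m.+1) (tt m'.+1).
    { apply (link_sym _ (adj_sym Hadj)). exact Lm. }
    have Lk0 := ccS_link m. rewrite Hj in Lk0.
    destruct (link_res Lk0 Lm') as [y2 Hy2].
    exists m'.+1. split. lia. split. by rewrite E2.
    exists (tt m'.+1). split. have := tt_lt m'.+1. lra.
    exists (y + y2)%Z. rewrite plus_IZR. lra.
Qed.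

Lemma G_all j u0 : G j u0 -> forall u, G j u.
Proof.
  move=> H0.
  assert (Hge : forall u, u0 <= u -> G j u).
  { apply real_ind; auto.
    - intros t _ Ht. exact (G_right Ht).
    - intros t Ht IH. exact (G_left Ht IH). }
  intros u. destruct (archimed (u0 - u)) as [A1 A2].
  have := Hge (u + IZR (up (u0 - u))) ltac:(lra).
  move=> /(G_shift (- up (u0 - u))). rewrite opp_IZR.
  by replace (u + IZR (up (u0 - u)) + - IZR (up (u0 - u))) with u by ring.
Qed.

Lemma appear j : exists m, (A <= m)%N /\ cc m = j.
Proof.
  destruct Htree as [Hc _]. move: (Hc (cc A) j) => /connectP [p Hp ->].
  have : exists m, (A <= m)%N /\ cc m = cc A by exists A.
  elim: p (cc A) Hp => [|y p IH] x //= /andP [Hxy Hp] [m [Hm Hx]].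
  apply IH; auto.
  have HG : G x (tt m).
  { exists m. split; auto. split; auto. exists (tt m). split. have := tt_lt m. lra.
    exists 0%Z. simpl. ring. }
  destruct (link_ex Hxy) as [u Hu].
  destruct (G_all HG u) as [m1 [Hm1 [Hx1 [s [Hs [y0 Hy0]]]]]].
  have Ls : link x y s by rewrite Hy0; apply link_per.
  have Hst : s = tt m1.
  { destruct (Rle_lt_or_eq_dec _ _ (proj1 Hs)) as [Hlt|Heq]; auto.
    exfalso. rewrite -Hx1 in Hxy Ls. exact (ccS_nolink (conj Hlt (proj2 Hs)) Hxy Ls). }
  have [Pc Pt] := Hper Hm1.
  have Ls2 : link x y (tt (m1 + P)) by rewrite Pt -Hst; apply link_per.
  set m3 := (m1 + P).-1.
  have Hm3 : (m1 + P = m3.+1)%N by rewrite /m3; lia.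
  have L3 := ccS_link m3. rewrite -Hm3 Pc Hx1 in L3.
  have A3 := ccS_adj m3. rewrite -Hm3 Pc Hx1 in A3.
  have L3' : link x (cc m3) (tt (m1 + P)).
  { apply (link_sym _ A3). exact L3. }
  have := link_uniq Hxy (adj_sym A3) Ls2 L3'. move=> ->.
  exists m3. split; auto. rewrite /m3. lia.
Qed.

Lemma cover i : covered c F loc i.
Proof.
  intros theta. destruct (rp_surj i theta) as [u Hu].
  destruct (appear i) as [m0 [Hm0 Hc0]].
  have HG : G i (tt m0).
  { exists m0. split; auto. split; auto. exists (tt m0). split. have := tt_lt m0. lra.
    exists 0%Z. simpl. ring. }
  destruct (G_all HG u) as [m [Hm [Hi [s [Hs [y Hy]]]]]].
  have Hzp : 0 < IZR z by apply IZR_lt; lia.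
  exists (IZR z), s. split; auto. intros k.
  exists (s + INR k * IZR z). split. rewrite S_INR. lra.
  exists rb0. split.
  - have [P1 P2] := perk k Hm. have [P3 P4] := perk k (leqW Hm).
    rewrite -Hi -P1. apply cc_loc. rewrite P2.
    have -> : ((m + k * P).+1 = m.+1 + k * P)%N by lia. rewrite P4. lra.
  - rewrite -Hu Hy INR_IZR_INZ -mult_IZR Rplus_assoc -plus_IZR. apply rp_per.
Qed.

End Per.

End Traj.
End Dyn.
End Geo.

Lemma one_left (n : nat) (L : {set 'I_n}) : (0 < n)%N -> #|L| = (n - 1)%N ->
  exists rb0, rb0 \notin L /\ forall rb, rb \notin L -> rb = rb0.
Proof.
  move=> Hn HL. have HC := cardsC L. rewrite HL card_ord in HC.
  have H1 : #|~: L| = 1%N by lia.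
  move/eqP: H1 => /cards1P [x Hx]. exists x. split.
  - have : x \in ~: L by rewrite Hx set11. by rewrite in_setC.
  - move=> rb Hrb. have : rb \in ~: L by rewrite in_setC. rewrite Hx in_set1. by move/eqP.
Qed.

Lemma not_res_n (n : nat) (c : 'I_n -> R * R) (r : R) (F : schedule n) :
  (0 < n)%N -> ~ resilient c r F n.
Proof.
  move=> Hn Hres.
  have Hex : execution c r F [set: 'I_n] (fun _ => 0) (fun _ _ => None).
  { split; [|split].
    - intros rb. split; auto. intros Hd; exfalso; apply Hd. split. by rewrite in_setT. lra.
    - intros t Ht. exists t, (fun _ => None). split. lra. split; auto.
      intros rb. split; auto. intros Hd; exfalso; apply Hd. split. by rewrite in_setT. lra.
    - intros t Ht. exists 1. split. lra. auto. }
  have := Hres [set: 'I_n] (fun _ => 0) (fun _ _ => None).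
  rewrite cardsT card_ord => /(_ erefl) H.
  have := H (fun _ _ => Rle_refl 0) Hex (Ordinal Hn) 0.
  move=> [p [T0 [Hp Hm]]]. destruct (Hm 0%N) as [t [_ [rb [Hrb _]]]]. discriminate.
Qed.

Unset Implicit Arguments.
Theorem corollary3 (n : nat) (c : 'I_n -> R * R) (r : R) (F : schedule n) :
  (0 < n)%N -> Rlt 0 r ->
  disjoint_circles c -> distinct_links c r ->
  is_tree (comm_adj c r) ->
  sync_schedule c r F ->
  uncovering_resilience c r F (n - 1)%N.
Proof.
  move=> Hn Hr Hdisj Hdl Htree Hsync.
  split; [by rewrite leq_subr|split].
  - intros L tau loc HL Htau Hexe i.
    destruct (one_left Hn HL) as [rb0 [Hrb0 Hrb0u]].
    have HT := Tst_pos L tau.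
    destruct (alive Hexe Hrb0 (t := Tst L tau + 1) ltac:(lra)) as [j0 Hj0].
    case: (ltnP 1 n) => Hn2.
    + destruct (per_ex Hdisj Hsync Hdl tau Hrb0 Htree Hn2 j0) as [A [P [z [HP [Hz Hper]]]]].
      exact (cover Hdl Hexe Hrb0 Hrb0u Hj0 HP Hz Hper i).
    + have Hnoadj : forall a b : 'I_n, ~ comm_adj c r a b.
      { move=> a b /adj_neq Hab. apply Hab. apply: ord_inj.
        have := ltn_ord a. have := ltn_ord b. lia. }
      have Hij : i = j0 by apply: ord_inj; have := ltn_ord i; have := ltn_ord j0; lia.
      subst j0.
      intros theta. destruct (rp_surj Hsync i theta) as [u Hu].
      set t0 := Tst L tau + 1.
      destruct (archimed (t0 - u)) as [A1 A2].
      set s := u + IZR (up (t0 - u)).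
      exists 1, s. split. lra. intros k. exists (s + INR k * 1). split. rewrite S_INR. lra.
      exists rb0. split.
      * apply (stay Hexe Hrb0 Hrb0u (t0 := t0) (t1 := s + INR k * 1 + 1)); auto.
        unfold t0; lra. intros s0 k0 _ Hk0. by case: (Hnoadj _ _ Hk0).
        have := pos_INR k. unfold s; lra. lra.
      * rewrite -Hu /s Rmult_1_r INR_IZR_INZ Rplus_assoc -plus_IZR. apply (rp_per Hsync).
  - move=> k' /andP [H1 H2]. have -> : k' = n by lia. by apply not_res_n.
Qed.
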